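(* Let $0\le b<d\le n$ be integers and fix a homological degree. (1) If $\hat z$ is a relative cycle of $\hat K(b,d]$ whose boundary $\partial\hat z$ contains $\sigma\times\{b\}$ with $\min\sigma=b$, then $[\hat z]\notin\operatorname{im}\big(H(\hat K(b-1,d])\to H(\hat K(b,d])\big)$. (2) If $\hat z$ is a relative cycle of $\hat K[b,d)$ whose boundary $\partial\hat z$ contains $\sigma\times\{d\}$ with $\max\sigma=d$, then $[\hat z]\notin\operatorname{im}\big(H(\hat K[b,d+1))\to H(\hat K[b,d))\big)$. (3) If $\hat z$ is a relative cycle of $\hat K(b,d)$ whose boundary $\partial\hat z$ contains $\sigma\times\{b\}$ with $\min\sigma=b$ and $\tau\times\{d\}$ with $\max\tau=d$, then $[\hat z]\notin\operatorname{im}\big(H(\hat K(b-1,d))\to H(\hat K(b,d))\big)$ and $[\hat z]\notin\operatorname{im}\big(H(\hat K(b,d+1))\to H(\hat K(b,d))\big)$.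
   Context: Fix a field $\mathbb F$; all chains and homology groups have coefficients in $\mathbb F$. Let $n\ge 1$ and let $K$ be a finite $\Delta$-complex (distinct simplices may have the same boundary) in which every simplex $\sigma$ carries an integer interval $T(\sigma)=[\min\sigma,\max\sigma]\subseteq[0,n]$ with $\min\sigma<\max\sigma$, such that for each integer $i$ the set $K_i=\{\sigma: i\in T(\sigma)\}$ is a subcomplex (these form a zigzag $K_0\to K_1\leftarrow K_2\to\cdots$), and such that whenever $\sigma$ is a proper face of $\tau$ we have $\min\sigma<\min\tau<\max\tau<\max\sigma$. The prism $\hat K$ is the cell complex whose cells are the vertical cells $\sigma\times\{i\}$ for $\sigma\in K$ and integers $i\in T(\sigma)$ (of dimension $\dim\sigma$) and the horizontal cells $\sigma\times[i,i+1]$ for integers $i$ with $[i,i+1]\subseteq T(\sigma)$ (of dimension $\dim\sigma+1$), with boundary $\partial(\sigma\times\{i\})=(\partial\sigma)\times\{i\}$ and $\partial(\sigma\times[i,i+1])=(\partial\sigma)\times[i,i+1]+(-1)^{\dim\sigma}(\sigma\times\{i+1\}-\sigma\times\{i\})$ (terms not in $\hat K$ do not occur). For integers $i\le j$, $\hat K_i^j$ is the subcomplex of cells $\sigma\times T$ with $T\subseteq[i,j]$; so $\hat K_{-1}^{n+1}=\hat K$. For integers $b\le d$ define the pairs $\hat K[b,d]=(\hat K_b^d,\emptyset)$, $\hat K(b,d]=(\hat K_{-1}^d,\hat K_{-1}^b)$, $\hat K[b,d)=(\hat K_b^{n+1},\hat K_d^{n+1})$, $\hat K(b,d)=(\hat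 K,\hat K_{-1}^b\cup\hat K_d^{n+1})$, and write $H(\cdot)$ for their relative homology; maps between these groups are induced by inclusions of pairs. A relative cycle of a pair $(X,A)$ is a chain in $X$ whose boundary lies in $A$. A chain ''contains'' a cell if the cell's coefficient is nonzero. *)

(* Defs.v *)
From HB Require Import structures.
From mathcomp Require Import all_boot all_order all_algebra.
Set Implicit Arguments.
Unset Strict Implicit.
Unset Printing Implicit Defensive.
Import Order.TTheory GRing.Theory Num.Theory.
Local Open Scope ring_scope.

(* A finite Delta-complex with an integer interval T(s) = [tmin s, tmax s]
   attached to every simplex.  [face s j] is the j-th face of s
   (delete vertex j), meaningful for 0 < sdim s and j <= sdim s. *)
Record zzcx := ZZCx {
  simp : finType;
  sdim : simp -> nat;
  face : simp -> nat -> simp;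
  tmin : simp -> nat;
  tmax : simp -> nat }.

Inductive pface (K : zzcx) : simp K -> simp K -> Prop :=
| pface_face (t : simp K) (j : nat) :
    (0 < sdim t)%N -> (j <= sdim t)%N -> pface (face t j) t
| pface_trans (s r t : simp K) : pface s r -> pface r t -> pface s t.

Definition zz_axioms (n : nat) (K : zzcx) : Prop :=
  [/\
      (forall (t : simp K) j, (0 < sdim t)%N -> (j <= sdim t)%N ->
          sdim (face t j) = (sdim t).-1),
      (forall (t : simp K) i j, (1 < sdim t)%N -> (i < j)%N -> (j <= sdim t)%N ->
          face (face t j) i = face (face t i) j.-1),
      (forall s : simp K, (tmin s < tmax s)%N /\ (tmax s <= n)%N),
      (forall (i : nat) (s t : simp K), pface s t ->
          (tmin t <= i <= tmax t)%N -> (tmin s <= i <= tmax s)%N)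
    &
      (forall s t : simp K, pface s t ->
          [/\ (tmin s < tmin t)%N, (tmin t < tmax t)%N & (tmax t < tmax s)%N])].

Section Prism.
Variables (F : fieldType) (n : nat) (K : zzcx).

(* cells of the prism: (s, t, false) = s x {t}, (s, t, true) = s x [t, t+1] *)
Definition cell := (simp K * 'I_n.+1 * bool)%type.

Definition valid (e : cell) : bool :=
  let: (s, t, h) := e in
  if h then (tmin s <= t)%N && (t.+1 <= tmax s)%N
  else (tmin s <= t <= tmax s)%N.

Definition cdim (e : cell) : nat :=
  let: (s, _, h) := e in (sdim s + h)%N.

Definition bcoef (t s : simp K) : F :=
  \sum_(j < (sdim t).+1)
     (if (0 < sdim t)%N && (face t j == s) then (-1) ^+ j else 0).

(* coefficient of the cell e in the boundary of the cell f *)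
Definition inc (f e : cell) : F :=
  match f, e with
  | (t, i, false), (s, i', false) => if i' == i then bcoef t s else 0
  | (t, i, false), (_, _, true) => 0
  | (t, i, true), (s, i', true) => if i' == i then bcoef t s else 0
  | (t, i, true), (s, i', false) =>
      (-1) ^+ (sdim t) *
      (((s == t) && (val i' == (val i).+1)%N)%:R - ((s == t) && (i' == i))%:R)
  end.

Definition chain := {ffun cell -> F}.

(* boundary map (terms not in the prism do not occur) *)
Definition bd (c : chain) : chain :=
  [ffun e => if valid e then \sum_(f : cell) c f * inc f e else 0].

(* the subcomplex \hat K_lo^hi : cells s x T with T \subseteq [lo, hi] *)
Definition sub (lo hi : int) (e : cell) : bool :=
  let: (_, t, h) := e in
  if h then (lo <= (val t)%:Z) && (((val t).+1)%:Z <= hi)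
  else (lo <= (val t)%:Z) && ((val t)%:Z <= hi).

Definition cpair := ((cell -> bool) * (cell -> bool))%type.

Definition inchain (k : nat) (X : cell -> bool) (c : chain) : Prop :=
  forall e, c e != 0 -> [&& valid e, X e & cdim e == k].

Definition relcycle (k : nat) (P : cpair) (z : chain) : Prop :=
  inchain k P.1 z /\ (forall e, bd z e != 0 -> P.2 e).

(* for (X',A') included in (X,A) and z a relative k-cycle of (X,A):
   [z] lies in the image of H_k(X',A') -> H_k(X,A) (map induced by inclusion),
   i.e. z is homologous in (X,A) to a relative cycle z' of (X',A'):
   z - z' \in B_k(X) + C_k(A). *)
Definition in_image (k : nat) (P' P : cpair) (z : chain) : Prop :=
  exists z', relcycle k P' z' /\
    exists c a, [/\ inchain k.+1 P.1 c, inchain k P.2 a & z - z' = bd c + a].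

(* the pairs \hat K(b,d], \hat K[b,d), \hat K(b,d) *)
Definition pOC (b d : int) : cpair := (sub (-1) d, sub (-1) b).
Definition pCO (b d : int) : cpair := (sub b (n.+1)%:Z, sub d (n.+1)%:Z).
Definition pOO (b d : int) : cpair :=
  (sub (-1) (n.+1)%:Z, fun e => sub (-1) b e || sub d (n.+1)%:Z e).

End Prism.

(* Main.v *)
Require Import Defs.
From HB Require Import structures.
From mathcomp Require Import all_boot all_order all_algebra.
From mathcomp Require Import zify.
Import GRing.Theory Num.Theory.
Local Open Scope ring_scope.

Lemma bcoef_pface (F : fieldType) (K : zzcx) (t s : simp K) :
  bcoef F t s != 0 -> pface s t.
Proof.
rewrite /bcoef => H.
have [j Hj] : exists j : 'I_(sdim t).+1, (0 < sdim t)%N && (face t j == s).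
  apply/existsP; apply: contraR H => /existsPn Hn.
  by apply/eqP; apply: big1 => j _; move: (Hn j) => /negbTE ->.
move: Hj => /andP [H0 /eqP <-]; apply: pface_face => //.
by rewrite -ltnS.
Qed.

Lemma bdD (F : fieldType) n (K : zzcx) (x y : chain F n K) e :
  bd (x + y) e = bd x e + bd y e.
Proof.
rewrite !ffunE; case: (valid e); last by rewrite addr0.
by rewrite -big_split /=; apply: eq_bigr => f _; rewrite ffunE mulrDl.
Qed.

Lemma bdB (F : fieldType) n (K : zzcx) (x y : chain F n K) e :
  bd (x - y) e = bd x e - bd y e.
Proof.
rewrite !ffunE; case: (valid e); last by rewrite subr0.
rewrite -sumrB /=; apply: eq_bigr => f _; rewrite !ffunE mulrBl //.
Qed.

Lemma bd_valid (F : fieldType) n (K : zzcx) (x : chain F n K) e :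
  bd x e != 0 -> valid e.
Proof. by rewrite ffunE; case: (valid e); rewrite ?eqxx. Qed.

Section Key.
Variables (F : fieldType) (n : nat) (K : zzcx).
Hypothesis HK : forall s t : simp K, pface s t ->
  [/\ (tmin s < tmin t)%N, (tmin t < tmax t)%N & (tmax t < tmax s)%N].

Lemma bd_min (a : chain F n K) (s : simp K) (t : 'I_n.+1) :
  (forall f, a f != 0 -> valid f) ->
  (forall i : 'I_n.+1, nat_of_ord i = nat_of_ord t -> a (s, i, true) = 0) ->
  tmin s = nat_of_ord t -> bd a (s, t, false) = 0.
Proof.
move=> Hv Hh Hm; rewrite ffunE; case: ifP => // _.
apply: big1 => [[[t' i] h]] _.
have [->|Ha] := eqVneq (a (t', i, h)) 0; first by rewrite mul0r.
move: (Hv _ Ha) => /=; case: h Ha => /= Ha Hvl.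
  have [Est|Hst] := eqVneq s t'.
    subst t'; rewrite /=.
    have [Hi|Hi] := eqVneq (nat_of_ord t) (nat_of_ord i).+1.
      exfalso; move: Hvl; rewrite Hm Hi; lia.
    have [Hti|Hti] := eqVneq t i.
      by rewrite -Hti Hh ?mul0r.
    by rewrite ?(negbTE Hi) ?(negbTE Hti) subrr mulr0 mulr0.
  by rewrite ?(negbTE Hst) /= subrr mulr0 mulr0.
case: eqP => [Hti|_]; last by rewrite mulr0.
have [Hb|Hb] := eqVneq (bcoef F t' s) 0; first by rewrite Hb mulr0.
have [H1 _ _] := HK _ _ (@bcoef_pface _ _ _ _ Hb).
exfalso; move: Hvl H1; rewrite Hm Hti; lia.
Qed.

Lemma bd_min_h (c : chain F n K) (s : simp K) (i : 'I_n.+1) :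
  (forall f, c f != 0 -> valid f) ->
  ((nat_of_ord i <= tmin s)%N || (tmax s <= (nat_of_ord i).+1)%N) -> bd c (s, i, true) = 0.
Proof.
move=> Hv Hm; rewrite ffunE; case: ifP => // _.
apply: big1 => [[[t' j] h]] _.
have [->|Ha] := eqVneq (c (t', j, h)) 0; first by rewrite mul0r.
move: (Hv _ Ha) => /=; case: h Ha => /= Ha Hvl; last by rewrite mulr0.
case: eqP => [Hti|_]; last by rewrite mulr0.
have [Hb|Hb] := eqVneq (bcoef F t' s) 0; first by rewrite Hb mulr0.
have [H1 H2 H3] := HK _ _ (@bcoef_pface _ _ _ _ Hb).
exfalso; move: Hvl H1 H3 Hm; rewrite Hti; lia.
Qed.

Lemma bd_max (a : chain F n K) (s : simp K) (t : 'I_n.+1) :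
  (forall f, a f != 0 -> valid f) ->
  (forall i : 'I_n.+1, (nat_of_ord i).+1 = nat_of_ord t -> a (s, i, true) = 0) ->
  tmax s = nat_of_ord t -> bd a (s, t, false) = 0.
Proof.
move=> Hv Hh Hm; rewrite ffunE; case: ifP => // _.
apply: big1 => [[[t' i] h]] _.
have [->|Ha] := eqVneq (a (t', i, h)) 0; first by rewrite mul0r.
move: (Hv _ Ha) => /=; case: h Ha => /= Ha Hvl.
  have [Est|Hst] := eqVneq s t'.
    subst t'; rewrite /=.
    have [Hi|Hi] := eqVneq (nat_of_ord t) (nat_of_ord i).+1.
      by rewrite Hh ?mul0r.
    have [Hti|Hti] := eqVneq t i.
      exfalso; move: Hvl; rewrite Hm -Hti; lia.
    by rewrite ?(negbTE Hi) ?(negbTE Hti) subrr mulr0 mulr0.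
  by rewrite ?(negbTE Hst) /= subrr mulr0 mulr0.
case: eqP => [Hti|_]; last by rewrite mulr0.
have [Hb|Hb] := eqVneq (bcoef F t' s) 0; first by rewrite Hb mulr0.
have [H1 H2 H3] := HK _ _ (@bcoef_pface _ _ _ _ Hb).
exfalso; move: Hvl H3; rewrite Hm Hti; lia.
Qed.

End Key.

Lemma finish (F : fieldType) n (K : zzcx) (z z' c a : chain F n K) e :
  z - z' = bd c + a -> bd z' e = 0 -> bd (bd c) e = 0 -> bd a e = 0 ->
  bd z e = 0.
Proof.
move=> Heq H1 H2 H3.
have := congr1 (fun x => bd x e) Heq; rewrite /= bdB bdD H1 H2 H3.
by rewrite subr0 addr0.
Qed.

Theorem lemma5p2 (F : fieldType) (n : nat) (K : zzcx) (HK : zz_axioms n K)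
  (b d k : nat) (Hbd : (b < d)%N) (Hdn : (d <= n)%N) :
  [/\
   (* (1) *)
   (forall z : chain F n K, relcycle k (pOC n K b%:Z d%:Z) z ->
     forall (s : simp K) (t : 'I_n.+1), tmin s = b -> val t = b ->
     bd z (s, t, false) != 0 ->
     ~ in_image k (pOC n K (b%:Z - 1) d%:Z) (pOC n K b%:Z d%:Z) z),
   (* (2) *)
   (forall z : chain F n K, relcycle k (pCO n K b%:Z d%:Z) z ->
     forall (s : simp K) (t : 'I_n.+1), tmax s = d -> val t = d ->
     bd z (s, t, false) != 0 ->
     ~ in_image k (pCO n K b%:Z (d%:Z + 1)) (pCO n K b%:Z d%:Z) z)
  & (* (3) *)
   (forall z : chain F n K, relcycle k (pOO n K b%:Z d%:Z) z ->
     forall (s r : simp K) (t u : 'I_n.+1),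
     tmin s = b -> val t = b -> tmax r = d -> val u = d ->
     bd z (s, t, false) != 0 -> bd z (r, u, false) != 0 ->
     ~ in_image k (pOO n K (b%:Z - 1) d%:Z) (pOO n K b%:Z d%:Z) z /\
     ~ in_image k (pOO n K b%:Z (d%:Z + 1)) (pOO n K b%:Z d%:Z) z)].
Proof.
case: HK => _ _ _ _ HP.
have valc : forall k X (c : chain F n K) f, inchain k X c -> c f != 0 -> valid f.
  by move=> k0 X c0 f Hc Hf; case/and3P: (Hc f Hf).
have inX : forall k X (c : chain F n K) f, inchain k X c -> ~~ X f -> c f = 0.
  move=> k0 X c0 f Hc HX; apply/eqP; apply/negPn/negP => Hf.
  by case/and3P: (Hc f Hf) => _ HX' _; rewrite HX' in HX.
have rel0 : forall k (P : cpair n K) (z : chain F n K) f,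
    relcycle k P z -> ~~ P.2 f -> bd z f = 0.
  move=> k0 P z0 f [_ Hz] HX; apply/eqP; apply/negPn/negP => Hf.
  by rewrite (Hz f Hf) in HX.
have MIN : forall X A k0 (z' c a : chain F n K) (s : simp K) (t : 'I_n.+1),
    tmin s = t -> inchain k0.+1 X c -> inchain k0 A a ->
    (forall i : 'I_n.+1, nat_of_ord i = t -> ~~ A (s, i, true)) ->
    z' = z' -> bd (bd c) (s, t, false) = 0 /\ bd a (s, t, false) = 0.
  move=> X A k0 z' c a s t Hm Hc Ha HA _; split.
    apply: (@bd_min _ _ _ HP) => //; first exact: bd_valid.
    move=> i Hi; apply: (@bd_min_h _ _ _ HP); first by move=> f; exact: valc Hc.
    by rewrite Hi Hm leqnn.
  apply: (@bd_min _ _ _ HP) => //; first by move=> f; exact: valc Ha.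
  by move=> i Hi; apply: inX Ha _; apply: HA.
have MAX : forall X A k0 (c a : chain F n K) (s : simp K) (t : 'I_n.+1),
    tmax s = t -> inchain k0.+1 X c -> inchain k0 A a ->
    (forall i : 'I_n.+1, (nat_of_ord i).+1 = t -> ~~ A (s, i, true)) ->
    bd (bd c) (s, t, false) = 0 /\ bd a (s, t, false) = 0.
  move=> X A k0 c a s t Hm Hc Ha HA; split.
    apply: (@bd_max _ _ _ HP) => //; first exact: bd_valid.
    move=> i Hi; apply: (@bd_min_h _ _ _ HP); first by move=> f; exact: valc Hc.
    by rewrite Hm -Hi leqnn orbT.
  apply: (@bd_max _ _ _ HP) => //; first by move=> f; exact: valc Ha.
  by move=> i Hi; apply: inX Ha _; apply: HA.
split.
- move=> z Hz s t Hs Ht Hne [z' [Hz' [c [a [Hc Ha Heq]]]]].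
  have [H1 H2] := MIN _ _ _ z' c a s t (etrans Hs (esym Ht)) Hc Ha
    (fun i Hi => ltac:(move: Hi; rewrite /= ?Ht; lia)) erefl.
  move/eqP: Hne; apply; apply: finish Heq _ H1 H2.
  by apply: rel0 Hz' _; rewrite /= Ht; lia.
- move=> z Hz s t Hs Ht Hne [z' [Hz' [c [a [Hc Ha Heq]]]]].
  have [H1 H2] := MAX _ _ _ c a s t (etrans Hs (esym Ht)) Hc Ha
    (fun i Hi => ltac:(move: Hi; rewrite /= ?Ht ?Hu; lia)).
  move/eqP: Hne; apply; apply: finish Heq _ H1 H2.
  by apply: rel0 Hz' _; rewrite /= Ht; lia.
- move=> z Hz s r t u Hs Ht Hr Hu Hne1 Hne2; split.
  + move=> [z' [Hz' [c [a [Hc Ha Heq]]]]].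
    have [H1 H2] := MIN _ _ _ z' c a s t (etrans Hs (esym Ht)) Hc Ha
      (fun i Hi => ltac:(move: Hi; rewrite /= ?Ht; lia)) erefl.
    move/eqP: Hne1; apply; apply: finish Heq _ H1 H2.
    by apply: rel0 Hz' _; rewrite /= Ht; lia.
  + move=> [z' [Hz' [c [a [Hc Ha Heq]]]]].
    have [H1 H2] := MAX _ _ _ c a r u (etrans Hr (esym Hu)) Hc Ha
      (fun i Hi => ltac:(move: Hi; rewrite /= ?Ht ?Hu; lia)).
    move/eqP: Hne2; apply; apply: finish Heq _ H1 H2.
    by apply: rel0 Hz' _; rewrite /= Hu; lia.
Qed.
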